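(* Let $n\ge 1$. Then $\mathrm{tr}^f_n\big(f(x_n)\big)=0$ in $\mathrm{QWA}^f_{n-1}(A;z)$, where $f(x_n):=\sum_{i=0}^{l} f_i^{(n)}x_n^{\,l-i}\in\mathrm{QWA}^f_n(A;z)$.
   Context: Let $\Bbbk$ be a commutative ring, $z,t\in\Bbbk^\times$, and $A$ a symmetric Frobenius superalgebra over $\Bbbk$ with even trace $\mathrm{tr}$ (so $\mathrm{tr}(ab)=(-1)^{\bar a\bar b}\mathrm{tr}(ba)$), homogeneous basis $B_A$ and dual basis $\{b^\vee\}$ with $\mathrm{tr}(b^\vee c)=\delta_{b,c}$. Tensor factors of $A^{\otimes n}$ are numbered from right to left; for $a\in A$, $a^{(i)}:=1^{\otimes(n-i)}\otimes a\otimes 1^{\otimes(i-1)}$, and $\tau_i:=1^{\otimes(n-i-1)}\otimes\big(\sum_{b\in B_A}b\otimes b^\vee\big)\otimes1^{\otimes(i-1)}$. The quantum affine wreath product algebra $\mathrm{QAWA}_n(A;z)$ is the superalgebra generated by $A^{\otimes n}$, even invertible commuting $x_1,\dots,x_n$ and even $\sigma_1,\dots,\sigma_{n-1}$, subject to: $\sigma_i\sigma_j=\sigma_j\sigma_i$ for $|i-j|>1$; $\sigma_i\sigma_{i+1}\sigma_i=\sigma_{i+1}\sigma_i\sigma_{i+1}$; $\sigma_i^2=z\tau_i\sigma_i+1$; $\sigma_i\mathbf a=s_i(\mathbf a)\sigma_i$ for $\mathbf a\in A^{\otimes n}$ ($s_i$ superpermutes factors $i,i+1$); $\sigma_ix_j=x_j\sigma_i$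 for $j\ne i,i+1$; $\sigma_ix_i\sigma_i=x_{i+1}$; $x_i\mathbf a=\mathbf a x_i$. Fix $f(w)=f_0w^l+f_1w^{l-1}+\dots+f_l\in Z(A)_{\bar 0}[w]$ ($Z(A)_{\bar0}$ the even part of the supercenter) with $f_0=1$ and $f_l=t^2$. For $l\ge1$, the quantum cyclotomic wreath product algebra $\mathrm{QWA}^f_n(A;z)$ is the quotient of $\mathrm{QAWA}_n(A;z)$ by the two-sided ideal generated by $f(x_1)=\sum_i f_i^{(1)}x_1^{l-i}$; $\mathrm{QWA}^f_0:=\Bbbk$; if $l=0$ then $\mathrm{QWA}_n^f:=0$ for $n>0$. It is known that $\mathrm{QWA}^f_n$ embeds in $\mathrm{QWA}^f_{n+1}$ via $x_i\mapsto x_i$, $\sigma_j\mapsto\sigma_j$, $\mathbf a\mapsto 1\otimes\mathbf a$, and that there is a unique $(\mathrm{QWA}^f_n,\mathrm{QWA}^f_n)$-bimodule homomorphism $\mathrm{tr}^f_{n+1}:\mathrm{QWA}^f_{n+1}\to\mathrm{QWA}^f_n$ with $\mathrm{tr}^f_{n+1}(\sigma_n)=0$ and $\mathrm{tr}^f_{n+1}(a^{(n+1)}x_{n+1}^r)=\delta_{r,0}\mathrm{tr}(a)$ for $a\in A$, $0\le r<l$. *)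

(* Defs.v *)
From HB Require Import structures.
From mathcomp Require Import all_boot all_algebra.
Set Implicit Arguments. Unset Strict Implicit. Unset Printing Implicit Defensive.
Import GRing.Theory.
Local Open Scope ring_scope.

(* Symmetric Frobenius superalgebras over a commutative ring k, given through *)
(* a finite homogeneous k-basis B_A (with parities), a dual basis and an even *)
(* supersymmetric trace.                                                      *)
Record symFrobData (k : comNzRingType) (A : algType k) := SymFrobData {
  sf_B : finType;
  sf_b : sf_B -> A;
  sf_par : sf_B -> bool;   (* parity of each basis element (true = odd) *)
  sf_dual : sf_B -> A;
  sf_tr : A -> k
}.
Arguments sf_B {k A} s.
Arguments sf_b {k A} s _.
Arguments sf_par {k A} s _.
Arguments sf_dual {k A} s _.
Arguments sf_tr {k A} s _.

Section SuperFrob.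
Variables (k : comNzRingType) (A : algType k) (F : symFrobData A).

Definition homog (p : bool) (a : A) : Prop :=
  exists c : sf_B F -> k, a = \sum_(b | sf_par F b == p) c b *: sf_b F b.

Definition symFrob_axioms : Prop :=
  (forall a : A, exists c : sf_B F -> k, a = \sum_b c b *: sf_b F b) /\
  (forall c : sf_B F -> k, \sum_b c b *: sf_b F b = 0 -> forall b, c b = 0) /\
  homog false 1 /\
  (forall p q (a b : A), homog p a -> homog q b -> homog (p (+) q) (a * b)) /\
  (forall (c : k) (a b : A), sf_tr F (c *: a + b) = c * sf_tr F a + sf_tr F b) /\
  (forall a, homog true a -> sf_tr F a = 0) /\
  (forall p q (a b : A), homog p a -> homog q b ->
      sf_tr F (a * b) = (-1) ^+ (p && q) * sf_tr F (b * a)) /\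
  (forall b c, sf_tr F (sf_dual F b * sf_b F c) = (b == c)%:R).

End SuperFrob.

(* Elements are formal k-algebra terms in the generators; the algebra is the  *)
(* quotient of the term algebra by the congruence [qeq n] generated by the    *)
(* axioms of an associative unital k-algebra and the defining relations.      *)
(* To have one term language for all n, the generators carry arbitrary nat    *)
(* indices, and generators with out-of-range index are set to 0 in level n    *)
(* (this does not change the presented algebra).                              *)
Section Presentation.
Variables (k : comNzRingType) (A : algType k).

Inductive gen :=
  | GA of nat & A
  | GX of nat
  | GXi of nat
  | GS of nat.

Inductive term :=
  | tG of gen
  | tC of k
  | tAdd of term & term
  | tMul of term & term.

Fixpoint tpow (u : term) (r : nat) : term :=
  if r is r'.+1 then tMul u (tpow u r') else tC 1.

Definition tsum (s : seq term) : term := foldr tAdd (tC 0) s.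

Definition inA (n i : nat) : bool := (0 < i <= n)%N.
Definition inS (n i : nat) : bool := (0 < i < n)%N.

Definition gen_inrange (n : nat) (g : gen) : bool :=
  match g with
  | GA i _ => inA n i | GX i => inA n i | GXi i => inA n i | GS i => inS n i
  end.

Fixpoint inrange (n : nat) (u : term) : bool :=
  match u with
  | tG g => gen_inrange n g
  | tC _ => true
  | tAdd u v => inrange n u && inrange n v
  | tMul u v => inrange n u && inrange n v
  end.

Definition swapi (i j : nat) : nat :=
  if j == i then i.+1 else if j == i.+1 then i else j.

Variables (F : symFrobData A) (z : k) (f : nat -> A) (l : nat).

Definition tau (i : nat) : term :=
  tsum [seq tMul (tG (GA i.+1 (sf_b F b))) (tG (GA i (sf_dual F b))) | b <- enum (sf_B F)].

Definition fpoly (i : nat) : term :=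
  tsum [seq tMul (tG (GA i (f j))) (tpow (tG (GX i)) (l - j)) | j <- iota 0 l.+1].

Inductive qrel (n : nat) : term -> term -> Prop :=
  | r_Aadd i a b : inA n i ->
      qrel n (tG (GA i (a + b))) (tAdd (tG (GA i a)) (tG (GA i b)))
  | r_Ascal i c a : inA n i ->
      qrel n (tG (GA i (c *: a))) (tMul (tC c) (tG (GA i a)))
  | r_Amul i a b : inA n i ->
      qrel n (tG (GA i (a * b))) (tMul (tG (GA i a)) (tG (GA i b)))
  | r_Aone i : inA n i -> qrel n (tG (GA i 1)) (tC 1)
  | r_Acomm i j p q a b : inA n i -> inA n j -> i != j ->
      homog F p a -> homog F q b ->
      qrel n (tMul (tG (GA i a)) (tG (GA j b)))
             (tMul (tC ((-1) ^+ (p && q))) (tMul (tG (GA j b)) (tG (GA i a))))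
  | r_Xinv1 i : inA n i -> qrel n (tMul (tG (GX i)) (tG (GXi i))) (tC 1)
  | r_Xinv2 i : inA n i -> qrel n (tMul (tG (GXi i)) (tG (GX i))) (tC 1)
  | r_Xcomm i j : inA n i -> inA n j ->
      qrel n (tMul (tG (GX i)) (tG (GX j))) (tMul (tG (GX j)) (tG (GX i)))
  | r_Sfar i j : inS n i -> inS n j -> ((i.+1 < j) || (j.+1 < i))%N ->
      qrel n (tMul (tG (GS i)) (tG (GS j))) (tMul (tG (GS j)) (tG (GS i)))
  | r_Sbraid i : inS n i -> inS n i.+1 ->
      qrel n (tMul (tG (GS i)) (tMul (tG (GS i.+1)) (tG (GS i))))
             (tMul (tG (GS i.+1)) (tMul (tG (GS i)) (tG (GS i.+1))))
  | r_Squad i : inS n i ->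
      qrel n (tMul (tG (GS i)) (tG (GS i)))
             (tAdd (tMul (tC z) (tMul (tau i) (tG (GS i)))) (tC 1))
  | r_SA i j a : inS n i -> inA n j ->
      qrel n (tMul (tG (GS i)) (tG (GA j a))) (tMul (tG (GA (swapi i j) a)) (tG (GS i)))
  | r_SX i j : inS n i -> inA n j -> j != i -> j != i.+1 ->
      qrel n (tMul (tG (GS i)) (tG (GX j))) (tMul (tG (GX j)) (tG (GS i)))
  | r_SXS i : inS n i ->
      qrel n (tMul (tG (GS i)) (tMul (tG (GX i)) (tG (GS i)))) (tG (GX i.+1))
  | r_XA i j a : inA n i -> inA n j ->
      qrel n (tMul (tG (GX i)) (tG (GA j a))) (tMul (tG (GA j a)) (tG (GX i)))
  | r_kill g : ~~ gen_inrange n g -> qrel n (tG g) (tC 0)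
  (* cyclotomic relation f(x_1) = 0 (only for n > 0; QWA_0 = k) *)
  | r_cyc : (0 < n)%N -> qrel n (fpoly 1) (tC 0).

Inductive qeq (n : nat) : term -> term -> Prop :=
  | q_base u v : qrel n u v -> qeq n u v
  | q_refl u : qeq n u u
  | q_sym u v : qeq n u v -> qeq n v u
  | q_trans u v w : qeq n u v -> qeq n v w -> qeq n u w
  | q_add u u' v v' : qeq n u u' -> qeq n v v' -> qeq n (tAdd u v) (tAdd u' v')
  | q_mul u u' v v' : qeq n u u' -> qeq n v v' -> qeq n (tMul u v) (tMul u' v')
  | q_addA u v w : qeq n (tAdd u (tAdd v w)) (tAdd (tAdd u v) w)
  | q_addC u v : qeq n (tAdd u v) (tAdd v u)
  | q_add0 u : qeq n (tAdd u (tC 0)) u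
  | q_addN u : qeq n (tAdd u (tMul (tC (-1)) u)) (tC 0)
  | q_mulA u v w : qeq n (tMul u (tMul v w)) (tMul (tMul u v) w)
  | q_mul1l u : qeq n (tMul (tC 1) u) u
  | q_mul1r u : qeq n (tMul u (tC 1)) u
  | q_mulDl u v w : qeq n (tMul (tAdd u v) w) (tAdd (tMul u w) (tMul v w))
  | q_mulDr u v w : qeq n (tMul u (tAdd v w)) (tAdd (tMul u v) (tMul u w))
  | q_Cadd c d : qeq n (tC (c + d)) (tAdd (tC c) (tC d))
  | q_Cmul c d : qeq n (tC (c * d)) (tMul (tC c) (tC d))
  | q_Ccomm c u : qeq n (tMul (tC c) u) (tMul u (tC c)).

End Presentation.

(* Main.v *)
Require Import Defs.
From HB Require Import structures.
From mathcomp Require Import all_boot all_algebra.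
From Stdlib Require Import Setoid Morphisms.
From mathcomp Require Import zify.
Set Implicit Arguments. Unset Strict Implicit. Unset Printing Implicit Defensive.
Import GRing.Theory.
Local Open Scope ring_scope.


#[global] Instance qeq_Equiv (k : comNzRingType) (A : algType k) (F : symFrobData A) z f l N :
  Equivalence (qeq F z f l N).
Proof. split; [exact: q_refl | exact: q_sym | exact: q_trans]. Qed.

#[global] Instance qeq_RR (k : comNzRingType) (A : algType k) (F : symFrobData A) z f l N :
  RewriteRelation (qeq F z f l N) := {}.

#[global] Instance tAdd_Proper (k : comNzRingType) (A : algType k) (F : symFrobData A) z f l N :
  Proper (qeq F z f l N ==> qeq F z f l N ==> qeq F z f l N) (@tAdd k A).
Proof. by move=> ? ? ? ? ? ?; apply: q_add. Qed.

#[global] Instance tMul_Proper (k : comNzRingType) (A : algType k) (F : symFrobData A) z f l N :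
  Proper (qeq F z f l N ==> qeq F z f l N ==> qeq F z f l N) (@tMul k A).
Proof. by move=> ? ? ? ? ? ?; apply: q_mul. Qed.

#[global] Hint Resolve q_refl : core.

Infix "⊕" := tAdd (at level 50, left associativity).
Infix "⊗" := tMul (at level 40, left associativity).

Section Tool.
Variables (k : comNzRingType) (A : algType k) (F : symFrobData A) (z : k) (f : nat -> A) (l N : nat).
Local Notation "u ≡ v" := (qeq F z f l N u v) (at level 70).
Local Notation tC := (@tC k A).

Lemma taddA u v w : u ⊕ (v ⊕ w) ≡ u ⊕ v ⊕ w. Proof. exact: q_addA. Qed.
Lemma taddC u v : u ⊕ v ≡ v ⊕ u. Proof. exact: q_addC. Qed.
Lemma tadd0 u : u ⊕ tC 0 ≡ u. Proof. exact: q_add0. Qed.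
Lemma tadd0l u : tC 0 ⊕ u ≡ u. Proof. by rewrite taddC tadd0. Qed.
Lemma tmulA u v w : u ⊗ (v ⊗ w) ≡ u ⊗ v ⊗ w. Proof. exact: q_mulA. Qed.
Lemma tmul1l u : tC 1 ⊗ u ≡ u. Proof. exact: q_mul1l. Qed.
Lemma tmul1r u : u ⊗ tC 1 ≡ u. Proof. exact: q_mul1r. Qed.
Lemma tmulDl u v w : (u ⊕ v) ⊗ w ≡ u ⊗ w ⊕ v ⊗ w. Proof. exact: q_mulDl. Qed.
Lemma tmulDr u v w : u ⊗ (v ⊕ w) ≡ u ⊗ v ⊕ u ⊗ w. Proof. exact: q_mulDr. Qed.
Lemma tCadd c d : tC c ⊕ tC d ≡ tC (c + d). Proof. symmetry; exact: q_Cadd. Qed.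
Lemma tCmul c d : tC c ⊗ tC d ≡ tC (c * d). Proof. symmetry; exact: q_Cmul. Qed.
Lemma tCcomm c u : tC c ⊗ u ≡ u ⊗ tC c. Proof. exact: q_Ccomm. Qed.

Lemma tCmulA c d u : tC c ⊗ (tC d ⊗ u) ≡ tC (c * d) ⊗ u.
Proof. by rewrite tmulA tCmul. Qed.

Lemma tCaddM c d u : tC c ⊗ u ⊕ tC d ⊗ u ≡ tC (c + d) ⊗ u.
Proof. by rewrite -tmulDl tCadd. Qed.

Lemma taddK u v : u ⊕ v ⊕ tC (-1) ⊗ v ≡ u.
Proof. by rewrite -taddA q_addN tadd0. Qed.

Lemma tmul0l u : tC 0 ⊗ u ≡ tC 0.
Proof.
have H : tC 0 ⊗ u ≡ tC 0 ⊗ u ⊕ tC 0 ⊗ u by rewrite tCaddM addr0.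
transitivity (tC 0 ⊗ u ⊕ tC 0 ⊗ u ⊕ tC (-1) ⊗ (tC 0 ⊗ u)); first by rewrite taddK.
by rewrite -H q_addN.
Qed.
Lemma tmul0r u : u ⊗ tC 0 ≡ tC 0.
Proof. by rewrite -tCcomm tmul0l. Qed.

Lemma tCmid u c v : u ⊗ (tC c ⊗ v) ≡ tC c ⊗ (u ⊗ v).
Proof. by rewrite tmulA -tCcomm -tmulA. Qed.
Lemma tCmulDr c u v : tC c ⊗ (u ⊕ v) ≡ tC c ⊗ u ⊕ tC c ⊗ v.
Proof. exact: tmulDr. Qed.
Lemma tCmul1 u : tC 1 ⊗ u ≡ u. Proof. exact: tmul1l. Qed.

Lemma taddIr u v w : u ⊕ w ≡ v ⊕ w -> u ≡ v.
Proof. move=> H. by rewrite -(taddK u w) H taddK. Qed.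

Lemma teq0_add u v : u ≡ tC 0 -> v ≡ tC 0 -> u ⊕ v ≡ tC 0.
Proof. by move=> -> ->; rewrite tadd0. Qed.
Lemma teq0_scal c u : u ≡ tC 0 -> tC c ⊗ u ≡ tC 0.
Proof. by move=> ->; rewrite tmul0r. Qed.


Lemma taddIl u v w : w ⊕ u ≡ w ⊕ v -> u ≡ v.
Proof. by move=> H; apply: (@taddIr u v w); rewrite taddC H taddC. Qed.

Lemma tsum_cat (s1 s2 : seq (term A)) : tsum (s1 ++ s2) ≡ tsum s1 ⊕ tsum s2.
Proof.
elim: s1 => [|x s1 IH] /=; first by rewrite tadd0l.
by rewrite /tsum /= -/(tsum _) IH taddA.
Qed.

Lemma tsum_consE x (s : seq (term A)) : tsum (x :: s) = x ⊕ tsum s.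
Proof. by []. Qed.

Lemma tsum_eq (I : eqType) (s : seq I) (g h : I -> term A) :
  (forall x, x \in s -> g x ≡ h x) -> tsum [seq g x | x <- s] ≡ tsum [seq h x | x <- s].
Proof.
elim: s => [|x s IH] H //.
rewrite map_cons map_cons !tsum_consE (H x (mem_head _ _)) IH //.
by move=> y ys; apply: H; rewrite in_cons ys orbT.
Qed.


Lemma tsum_add (I : Type) (s : seq I) (g h : I -> term A) :
  tsum [seq g x | x <- s] ⊕ tsum [seq h x | x <- s] ≡ tsum [seq g x ⊕ h x | x <- s].
Proof.
elim: s => [|x s IH]; first by rewrite tadd0.
rewrite !map_cons !tsum_consE -IH.
rewrite -!taddA; apply: q_add => //.
by rewrite taddC -!taddA; apply: q_add => //; rewrite taddC.
Qed.

Lemma tsum_mull (I : Type) (s : seq I) (g : I -> term A) u :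
  u ⊗ tsum [seq g x | x <- s] ≡ tsum [seq u ⊗ g x | x <- s].
Proof.
elim: s => [|x s IH]; first by rewrite tmul0r.
by rewrite !map_cons !tsum_consE tmulDr IH.
Qed.

Lemma tsum_mulr (I : Type) (s : seq I) (g : I -> term A) u :
  tsum [seq g x | x <- s] ⊗ u ≡ tsum [seq g x ⊗ u | x <- s].
Proof.
elim: s => [|x s IH]; first by rewrite tmul0l.
by rewrite !map_cons !tsum_consE tmulDl IH.
Qed.

Lemma tsum_zero (I : Type) (s : seq I) : tsum [seq tC 0 | x <- s] ≡ tC 0.
Proof. by elim: s => [|x s IH] //; rewrite map_cons tsum_consE IH tadd0. Qed.

Lemma tsum_eq0 (I : eqType) (s : seq I) (g : I -> term A) :
  (forall x, x \in s -> g x ≡ tC 0) -> tsum [seq g x | x <- s] ≡ tC 0.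
Proof.
move=> H; transitivity (tsum [seq tC 0 | x <- s]); first exact: tsum_eq.
exact: tsum_zero.
Qed.

Lemma tsum_swap (I J : Type) (s1 : seq I) (s2 : seq J) (g : I -> J -> term A) :
  tsum [seq tsum [seq g x y | y <- s2] | x <- s1] ≡
  tsum [seq tsum [seq g x y | x <- s1] | y <- s2].
Proof.
elim: s1 => [|x s1 IH].
  by symmetry; apply: tsum_zero.
rewrite map_cons tsum_consE IH tsum_add.
by [].
Qed.

Lemma tpowSr u r : tpow u r.+1 ≡ tpow u r ⊗ u.
Proof.
elim: r => [|r IH]; first by rewrite /= tmul1r tmul1l.
change (u ⊗ tpow u r.+1 ≡ tpow u r.+1 ⊗ u).
by rewrite {1}IH tmulA.
Qed.

Lemma tpow_comm u r : tpow u r ⊗ u ≡ u ⊗ tpow u r.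
Proof. by rewrite -tpowSr. Qed.

End Tool.
Arguments taddA {k A F z f l N} u v w.
Arguments taddC {k A F z f l N} u v.
Arguments tadd0 {k A F z f l N} u.
Arguments tadd0l {k A F z f l N} u.
Arguments tmulA {k A F z f l N} u v w.
Arguments tmul1l {k A F z f l N} u.
Arguments tmul1r {k A F z f l N} u.
Arguments tmulDl {k A F z f l N} u v w.
Arguments tmulDr {k A F z f l N} u v w.
Arguments tCadd {k A F z f l N} c d.
Arguments tCmul {k A F z f l N} c d.
Arguments tCcomm {k A F z f l N} c u.
Arguments tCmulA {k A F z f l N} c d u.
Arguments tCaddM {k A F z f l N} c d u.
Arguments taddK {k A F z f l N} u v.
Arguments tmul0l {k A F z f l N} u.
Arguments tmul0r {k A F z f l N} u.
Arguments tCmid {k A F z f l N} u c v.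
Arguments tCmulDr {k A F z f l N} c u v.
Arguments tpowSr {k A F z f l N} u r.
Arguments tpow_comm {k A F z f l N} u r.


Section Frob.
Variables (k : comNzRingType) (A : algType k) (F : symFrobData A).
Hypothesis HF : symFrob_axioms F.
Local Notation B := (sf_B F).
Local Notation bb := (sf_b F).
Local Notation dd := (sf_dual F).
Local Notation tr := (sf_tr F).
Local Notation par := (sf_par F).

Lemma Hspan a : exists c : B -> k, a = \sum_b c b *: bb b.
Proof. by case: HF. Qed.
Lemma Hmulh p q (a b : A) : homog F p a -> homog F q b -> homog F (p (+) q) (a * b).
Proof. by case: HF => _ [_ [_ [H _]]]; apply: H. Qed.
Lemma Hlin (c : k) (a b : A) : tr (c *: a + b) = c * tr a + tr b.
Proof. by case: HF => _ [_ [_ [_ [H _]]]]; apply: H. Qed.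
Lemma Hodd a : homog F true a -> tr a = 0.
Proof. by case: HF => _ [_ [_ [_ [_ [H _]]]]]; apply: H. Qed.
Lemma Hsym p q (a b : A) : homog F p a -> homog F q b ->
      tr (a * b) = (-1) ^+ (p && q) * tr (b * a).
Proof. by case: HF => _ [_ [_ [_ [_ [_ [H _]]]]]]; apply: H. Qed.
Lemma Hdual b c : tr (dd b * bb c) = (b == c)%:R.
Proof. by case: HF => _ [_ [_ [_ [_ [_ [_ H]]]]]]; apply: H. Qed.

Lemma tr0 : tr 0 = 0.
Proof. have := Hlin 1 0 0; rewrite scale1r addr0 mul1r => H.
by apply: (addrI (tr 0)); rewrite addr0 -H. Qed.
Lemma trD a b : tr (a + b) = tr a + tr b.
Proof. by rewrite -[a]scale1r Hlin mul1r scale1r. Qed.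
Lemma trZ c a : tr (c *: a) = c * tr a.
Proof. by rewrite -[c *: a]addr0 Hlin tr0 addr0. Qed.
Lemma tr_sum (I : Type) (s : seq I) (P : pred I) (g : I -> A) :
  tr (\sum_(i <- s | P i) g i) = \sum_(i <- s | P i) tr (g i).
Proof. exact: (big_morph tr trD tr0). Qed.

Lemma expand a : a = \sum_c tr (dd c * a) *: bb c.
Proof.
have [al ->] := Hspan a.
apply: eq_bigr => c _; congr (_ *: _).
rewrite mulr_sumr tr_sum (bigD1 c) //= big1 ?addr0.
  by rewrite -scalerAr trZ Hdual eqxx mulr1.
by move=> e /negbTE ne; rewrite -scalerAr trZ Hdual eq_sym ne mulr0.
Qed.

Lemma homog0 p : homog F p 0.
Proof. by exists (fun _ => 0); rewrite big1 // => b _; rewrite scale0r. Qed.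
Lemma homogD p a b : homog F p a -> homog F p b -> homog F p (a + b).
Proof.
move=> [c1 ->] [c2 ->]; exists (fun e => c1 e + c2 e).
by rewrite -big_split /=; apply: eq_bigr => e _; rewrite scalerDl.
Qed.
Lemma homog_basis c : homog F (par c) (bb c).
Proof.
exists (fun e => (e == c)%:R); rewrite (bigD1 c) //= big1 ?addr0 ?eqxx ?scale1r //.
by move=> e /andP [_ /negbTE ->]; rewrite scale0r.
Qed.

Lemma homog_filter p (al : B -> k) : homog F p (\sum_(b | par b == p) al b *: bb b).
Proof. by exists al. Qed.

Lemma trodd p q a b : homog F p a -> homog F q b -> p != q -> tr (a * b) = 0.
Proof.
move=> ha hb pq; apply: Hodd.
by have := Hmulh ha hb; case: p q pq {ha hb} => [] [].
Qed.

Lemma dual_homog c : homog F (par c) (dd c).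
Proof.
set p := par c.
have E := expand (dd c).
pose al e := tr (dd e * dd c).
pose w' := \sum_(e | par e == p) al e *: bb e.
pose w := \sum_(e | par e == ~~ p) al e *: bb e.
have Ed : dd c = w' + w.
  rewrite {1}E (bigID (fun e => par e == p)) /=; congr (_ + _).
  by apply: eq_bigl => e; case: (par e); case: (p).
have hw' : homog F p w' by exists al.
have hw : homog F (~~ p) w by exists al.
have H1 : forall e, tr (w * bb e) = 0.
  move=> e; case: (boolP (par e == p)) => [/eqP pe | pe].
    apply: (trodd hw (homog_basis e)); rewrite pe; by case: (p).
  have : tr (dd c * bb e) = 0.
    rewrite Hdual; case: eqP => // ce; by move: pe; rewrite -ce eqxx.
  rewrite Ed mulrDl trD (trodd hw' (homog_basis e)) ?add0r //.
  by rewrite eq_sym.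
have H2 : forall e, tr (bb e * w) = 0.
  by move=> e; rewrite (Hsym (homog_basis e) hw) (H1 e) mulr0.
have H3 : forall a, tr (a * w) = 0.
  move=> a; have [al2 ->] := Hspan a.
  rewrite mulr_suml tr_sum big1 // => e _.
  by rewrite -scalerAl trZ H2 mulr0.
have w0 : w = 0.
  by rewrite (expand w) big1 // => e _; rewrite H3 scale0r.
by rewrite Ed w0 addr0.
Qed.

Lemma dual_sign b c : (-1) ^+ (par b) * tr (dd c * dd b) = tr (dd b * dd c).
Proof.
rewrite (Hsym (dual_homog c) (dual_homog b)).
case: (boolP (par c == par b)) => [/eqP -> | ne].
  rewrite andbb mulrA; case: (par b); by rewrite ?expr1 ?expr0 ?mulrNN !mul1r.
rewrite (trodd (dual_homog b) (dual_homog c)) ?mulr0 //.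
by rewrite eq_sym.
Qed.

Lemma dual_identity c : \sum_b ((-1) ^+ (par b) * tr (dd c * dd b)) *: bb b = dd c.
Proof.
rewrite [RHS]expand; apply: eq_bigr => b _; by rewrite dual_sign.
Qed.

End Frob.


Section Main.
Variables (k : comNzRingType) (A : algType k) (F : symFrobData A) (z : k) (l : nat)
  (f : nat -> A) (n : nat) (T : term A -> term A).
Hypothesis HF : symFrob_axioms F.
Hypothesis Hf0 : f 0%N = 1.
Hypothesis Hfh : forall i, (i <= l)%N -> homog F false (f i) /\ (forall a, f i * a = a * f i).
Hypothesis Hn : (1 <= n)%N.
Hypothesis HT : forall u v, qeq F z f l n u v -> qeq F z f l n.-1 (T u) (T v).
Hypothesis Hadd : forall u v, qeq F z f l n.-1 (T (tAdd u v)) (tAdd (T u) (T v)).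
Hypothesis Hbim : forall u w v, inrange n.-1 u -> inrange n.-1 v ->
     qeq F z f l n.-1 (T (tMul u (tMul w v))) (tMul u (tMul (T w) v)).
Hypothesis Hsig : (2 <= n)%N -> qeq F z f l n.-1 (T (tG (GS A n.-1))) (tC A 0).
Hypothesis Htr : forall (a : A) (r : nat), (r < l)%N ->
     qeq F z f l n.-1 (T (tMul (tG (GA n a)) (tpow (tG (GX A n)) r)))
                      (tC A (if r == 0%N then sf_tr F a else 0)).

Local Notation "u ≡ v" := (qeq F z f l n u v) (at level 70).
Local Notation "u ≡' v" := (qeq F z f l n.-1 u v) (at level 70).
Local Notation tC := (@tC k A).
Local Notation B := (sf_B F).
Local Notation bb := (sf_b F).
Local Notation dd := (sf_dual F).
Local Notation tr := (sf_tr F).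
Local Notation par := (sf_par F).

Local Notation ga i a := (tG (GA i a)).
Local Notation xg i := (tG (GX A i)).
Local Notation sg i := (tG (GS A i)).

Lemma T0 : T (tC 0) ≡' tC 0.
Proof.
have H := @taddIr k A F z f l n.-1 (T (tC 0)) (tC 0) (T (tC 0)).
apply: H.
rewrite tadd0l -Hadd; apply: HT; by rewrite tadd0.
Qed.

Lemma Tscal c u : T (tC c ⊗ u) ≡' tC c ⊗ T u.
Proof.
transitivity (T (tC c ⊗ (u ⊗ tC 1))); first by apply: HT; rewrite tmul1r.
by rewrite Hbim // tmul1r.
Qed.

Lemma Tleft V M : inrange n.-1 V -> T (V ⊗ M) ≡' V ⊗ T M.
Proof.
move=> hV; transitivity (T (V ⊗ (M ⊗ tC 1))); first by apply: HT; rewrite tmul1r.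
by rewrite Hbim // tmul1r.
Qed.

Lemma Tright M V : inrange n.-1 V -> T (M ⊗ V) ≡' T M ⊗ V.
Proof.
move=> hV; transitivity (T (tC 1 ⊗ (M ⊗ V))); first by apply: HT; rewrite tmul1l.
by rewrite Hbim // tmul1l.
Qed.

Lemma Tsum (I : Type) (s : seq I) (g : I -> term A) :
  T (tsum [seq g x | x <- s]) ≡' tsum [seq T (g x) | x <- s].
Proof.
elim: s => [|x s IH]; first exact: T0.
by rewrite !map_cons !tsum_consE Hadd IH.
Qed.

Lemma ga_add i a b : (0 < i <= n)%N -> ga i (a + b) ≡ ga i a ⊕ ga i b.
Proof. by move=> h; apply: q_base; apply: r_Aadd. Qed.
Lemma ga_scal i c a : (0 < i <= n)%N -> ga i (c *: a) ≡ tC c ⊗ ga i a.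
Proof. by move=> h; apply: q_base; apply: r_Ascal. Qed.
Lemma ga_mul i a b : (0 < i <= n)%N -> ga i (a * b) ≡ ga i a ⊗ ga i b.
Proof. by move=> h; apply: q_base; apply: r_Amul. Qed.
Lemma ga_one i : (0 < i <= n)%N -> ga i 1 ≡ tC 1.
Proof. by move=> h; apply: q_base; apply: r_Aone. Qed.
Lemma ga0 i : (0 < i <= n)%N -> ga i 0 ≡ tC 0.
Proof. by move=> h; rewrite -(scale0r 1) ga_scal // tmul0l. Qed.

Lemma ga_lin i (I : Type) (s : seq I) (al : I -> k) (v : I -> A) : (0 < i <= n)%N ->
  ga i (\sum_(x <- s) al x *: v x) ≡ tsum [seq tC (al x) ⊗ ga i (v x) | x <- s].
Proof.
move=> h; elim: s => [|x s IH]; first by rewrite big_nil ga0.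
by rewrite big_cons map_cons tsum_consE ga_add // ga_scal // IH.
Qed.

Lemma ga_comm i j p q a b : (0 < i <= n)%N -> (0 < j <= n)%N -> i != j ->
  homog F p a -> homog F q b ->
  ga i a ⊗ ga j b ≡ tC ((-1) ^+ (p && q)) ⊗ (ga j b ⊗ ga i a).
Proof. by move=> *; apply: q_base; apply: r_Acomm. Qed.

Lemma sa_rel i j a : (0 < i < n)%N -> (0 < j <= n)%N ->
  sg i ⊗ ga j a ≡ ga (swapi i j) a ⊗ sg i.
Proof. by move=> *; apply: q_base; apply: r_SA. Qed.

Lemma xa_rel i j a : (0 < i <= n)%N -> (0 < j <= n)%N -> xg i ⊗ ga j a ≡ ga j a ⊗ xg i.
Proof. by move=> *; apply: q_base; apply: r_XA. Qed.

Lemma xpa_rel i j a r : (0 < i <= n)%N -> (0 < j <= n)%N ->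
  tpow (xg i) r ⊗ ga j a ≡ ga j a ⊗ tpow (xg i) r.
Proof.
move=> hi hj; elim: r => [|r IH] /=; first by rewrite tmul1l tmul1r.
by rewrite -tmulA IH tmulA xa_rel // tmulA.
Qed.

Lemma swapi_l i : swapi i i = i.+1.
Proof. by rewrite /swapi eqxx. Qed.
Lemma swapi_r i : swapi i i.+1 = i.
Proof. by rewrite /swapi eqxx; case: eqP => // /n_Sn. Qed.


Lemma scal_shuffle s a u v : tC s ⊗ ((tC a ⊗ u) ⊗ v) ≡ u ⊗ (tC (s * a) ⊗ v).
Proof. by rewrite -tmulA tCmulA tCmid. Qed.

Lemma ga_expand i a : (0 < i <= n)%N ->
  ga i a ≡ tsum [seq tC (tr (dd c * a)) ⊗ ga i (bb c) | c <- enum B].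
Proof. by move=> h; rewrite {1}(expand HF a) ga_lin // enumT. Qed.

Lemma tau_sym i : (0 < i)%N -> (i < n)%N ->
  tsum [seq ga i (bb e) ⊗ ga i.+1 (dd e) | e <- enum B] ≡ tau F i.
Proof.
move=> h0 h1.
have hi : (0 < i <= n)%N by rewrite h0 ltnW.
have hi1 : (0 < i.+1 <= n)%N by [].
transitivity (tsum [seq tsum [seq ga i.+1 (bb c) ⊗
     (tC ((-1) ^+ par e * tr (dd c * dd e)) ⊗ ga i (bb e)) | c <- enum B] | e <- enum B]).
  apply: tsum_eq => e _.
  have ne : i != i.+1 by rewrite neq_ltn ltnSn.
  rewrite (ga_comm hi hi1 ne (homog_basis e) (dual_homog HF e)).
  rewrite andbb (ga_expand _ hi1) tsum_mulr tsum_mull.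
  apply: tsum_eq => c _; exact: scal_shuffle.
rewrite tsum_swap /tau; apply: tsum_eq => c _.
rewrite -tsum_mull; apply: q_mul => //.
rewrite -[X in _ ≡ ga i X](dual_identity HF c) enumT; symmetry.
exact: (ga_lin (index_enum B) (fun b => (-1) ^+ par b * tr (dd c * dd b)) bb hi).
Qed.

Lemma sig_tau i : (0 < i)%N -> (i < n)%N -> sg i ⊗ tau F i ≡ tau F i ⊗ sg i.
Proof.
move=> h0 h1.
have hi : (0 < i <= n)%N by rewrite h0 ltnW.
have hi1 : (0 < i.+1 <= n)%N by [].
have hs : (0 < i < n)%N by rewrite h0.
rewrite -{2}(tau_sym h0 h1) /tau tsum_mull tsum_mulr; apply: tsum_eq => e _.
rewrite tmulA sa_rel // swapi_r -tmulA sa_rel // swapi_l !tmulA //.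
Qed.


Lemma cancel_sc c u w : tC c ⊗ u ⊕ w ⊕ tC (- c) ⊗ u ≡ w.
Proof.
rewrite (taddC (tC c ⊗ u)) -taddA tCaddM subrr tmul0l tadd0 //.
Qed.

Definition Lq i := sg i ⊕ tC (- z) ⊗ tau F i.

Lemma squad i : (0 < i < n)%N -> sg i ⊗ sg i ≡ tC z ⊗ (tau F i ⊗ sg i) ⊕ tC 1.
Proof. by move=> h; apply: q_base; apply: r_Squad. Qed.

Lemma Lq_l i : (0 < i < n)%N -> Lq i ⊗ sg i ≡ tC 1.
Proof.
move=> h; rewrite /Lq tmulDl squad // -tmulA cancel_sc //.
Qed.

Lemma Lq_r i : (0 < i < n)%N -> sg i ⊗ Lq i ≡ tC 1.
Proof.
move=> h; case/andP: h => h0 h1.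
rewrite /Lq tmulDr tCmid sig_tau // squad ?h0 // cancel_sc //.
Qed.

Lemma sxs i : (0 < i < n)%N -> sg i ⊗ (xg i ⊗ sg i) ≡ xg i.+1.
Proof. by move=> h; apply: q_base; apply: r_SXS. Qed.

Lemma C3 i : (0 < i < n)%N ->
  xg i.+1 ⊗ sg i ≡ sg i ⊗ xg i ⊕ tC z ⊗ (xg i.+1 ⊗ tau F i).
Proof.
move=> h.
have E : sg i ⊗ xg i ≡ xg i.+1 ⊗ sg i ⊕ tC (- z) ⊗ (xg i.+1 ⊗ tau F i).
  rewrite -[X in X ≡ _]tmul1r -(Lq_r h) tmulA -(tmulA (sg i)) sxs //.
  by rewrite /Lq tmulDr tCmid.
rewrite E -taddA (taddC (tC (- z) ⊗ _)) tCaddM subrr tmul0l tadd0 //.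
Qed.

Fixpoint Qp i r := if r is r'.+1 then tpow (xg i.+1) r'.+1 ⊗ tau F i ⊕ Qp i r' ⊗ xg i
                   else tC 0.

Lemma C3p i r : (0 < i < n)%N ->
  tpow (xg i.+1) r ⊗ sg i ≡ sg i ⊗ tpow (xg i) r ⊕ tC z ⊗ Qp i r.
Proof.
move=> h; elim: r => [|r IH].
  by rewrite /= tmul1l tmul1r tmul0r tadd0.
set X := xg i.+1; set Y := xg i; set t := tau F i; set S := sg i.
have E1 : tpow X r.+1 ⊗ S ≡ (tpow X r ⊗ S) ⊗ Y ⊕ tC z ⊗ (tpow X r.+1 ⊗ t).
  rewrite (tpowSr X r) -(tmulA (tpow X r)) C3 // tmulDr; apply: q_add.
    by rewrite tmulA.
  by rewrite tCmid (tmulA (tpow X r) X t).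
rewrite E1 IH tmulDl -(tmulA S) -(tpowSr Y r) -(tmulA (tC z)).
change (Qp i r.+1) with (tpow X r.+1 ⊗ t ⊕ Qp i r ⊗ Y).
rewrite (tCmulDr z) -!taddA; apply: q_add => //.
by rewrite taddC.
Qed.


Definition Pq i := tsum [seq ga i.+1 (f j) ⊗ Qp i (l - j) | j <- iota 0 l.+1].
Definition Rq i := tsum [seq ga i.+1 (f j) ⊗
   (Qp i (l - j) ⊕ tC (-1) ⊗ (tpow (xg i.+1) (l - j) ⊗ tau F i)) | j <- iota 0 l.+1].

Lemma sga i a : (0 < i < n)%N -> ga i.+1 a ⊗ sg i ≡ sg i ⊗ ga i a.
Proof.
move=> h; case/andP: (h) => h0 h1.
by rewrite sa_rel ?swapi_l // h0 ltnW.
Qed.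

Lemma C4 i : (0 < i < n)%N ->
  fpoly f l i.+1 ⊗ sg i ≡ sg i ⊗ fpoly f l i ⊕ tC z ⊗ Pq i.
Proof.
move=> h; rewrite /fpoly /Pq tsum_mulr !tsum_mull tsum_add.
apply: tsum_eq => j _.
rewrite -tmulA C3p // tmulDr tmulA sga // -tmulA tCmid //.
Qed.

Lemma C5 i : (0 < i < n)%N ->
  fpoly f l i.+1 ≡ sg i ⊗ fpoly f l i ⊗ sg i ⊕ tC z ⊗ (Rq i ⊗ sg i).
Proof.
move=> h.
rewrite -[X in X ≡ _]tmul1r -(Lq_l h) tmulA.
rewrite /Lq tmulDr C4 // tCmid.
have E : tC z ⊗ Pq i ⊕ tC (- z) ⊗ (fpoly f l i.+1 ⊗ tau F i) ≡ tC z ⊗ Rq i.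
  rewrite -[- z](mulrN1 z) -tCmulA -tCmulDr; apply: q_mul => //.
  rewrite /Pq /Rq /fpoly tsum_mulr tsum_mull tsum_add; apply: tsum_eq => j _.
  rewrite tmulDr; apply: q_add => //; rewrite tCmid; apply: q_mul => //.
  by rewrite tmulA.
rewrite -taddA E tmulDl; apply: q_add => //; by rewrite tmulA.
Qed.


Definition lowG j (g : gen A) : Prop :=
  match g with
  | GA i a => (0 < i <= j)%N /\ exists p, homog F p a
  | GX i => (0 < i <= j)%N
  | GXi _ => False
  | GS i => (0 < i)%N /\ (i < j)%N
  end.
Definition highG j (g : gen A) : Prop :=
  match g with
  | GA i a => (j < i <= n)%N /\ exists p, homog F p a
  | GX i => (j < i <= n)%N
  | GXi _ => False
  | GS i => (j < i)%N /\ (i < n)%N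
  end.
Fixpoint lowP j (u : term A) : Prop :=
  match u with
  | tG g => lowG j g | Defs.tC _ => True | tMul u v => lowP j u /\ lowP j v | tAdd _ _ => False
  end.
Fixpoint highP j (u : term A) : Prop :=
  match u with
  | tG g => highG j g | Defs.tC _ => True | tMul u v => highP j u /\ highP j v | tAdd _ _ => False
  end.

Definition mvl V W := exists s, W ⊗ V ≡ tC s ⊗ (V ⊗ W).

Lemma mvl_C1 V c : mvl V (tC c).
Proof. by exists 1; rewrite tmul1l tCcomm. Qed.
Lemma mvl_C2 c W : mvl (tC c) W.
Proof. by exists 1; rewrite tmul1l tCcomm. Qed.
Lemma mvl_sym1 V W : W ⊗ V ≡ V ⊗ W -> mvl V W.
Proof. by move=> h; exists 1; rewrite tmul1l. Qed.

Lemma mvl_mulW V W1 W2 : mvl V W1 -> mvl V W2 -> mvl V (W1 ⊗ W2).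
Proof.
move=> [s1 h1] [s2 h2]; exists (s2 * s1).
rewrite -(tmulA W1 W2 V) h2 tCmid (tmulA W1 V W2) h1.
by rewrite -(tmulA (tC s1) (V ⊗ W1) W2) tCmulA (tmulA V W1 W2).
Qed.

Lemma mvl_mulV V1 V2 W : mvl V1 W -> mvl V2 W -> mvl (V1 ⊗ V2) W.
Proof.
move=> [s1 h1] [s2 h2]; exists (s1 * s2).
rewrite (tmulA W V1 V2) h1 -(tmulA (tC s1) (V1 ⊗ W) V2) -(tmulA V1 W V2) h2.
by rewrite tCmid tCmulA (tmulA V1 V2 W).
Qed.

Lemma gen_mvl j g h : (j <= n)%N -> lowG j g -> highG j h ->
  mvl (tG g) (tG h) /\ mvl (tG h) (tG g).
Proof.
move=> jn; case: g => [i a|i|i|i]; case: h => [i' b|i'|i'|i'] //=.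
- move=> [/andP [i0 ij] [p hp]] [/andP [ji' i'n] [q hq]].
  have hi : (0 < i <= n)%N by rewrite i0 (leq_trans ij jn).
  have hi' : (0 < i' <= n)%N by rewrite i'n (leq_ltn_trans _ ji').
  have ne : i != i' by rewrite neq_ltn (leq_ltn_trans ij ji').
  split.
    by eexists; apply: ga_comm hi' hi _ hq hp; rewrite eq_sym.
  by eexists; apply: ga_comm hi hi' ne hp hq.
- move=> [/andP [i0 ij] _] /andP [ji' i'n].
  have hi : (0 < i <= n)%N by rewrite i0 (leq_trans ij jn).
  have hi' : (0 < i' <= n)%N by rewrite i'n (leq_ltn_trans _ ji').
  by split; apply: mvl_sym1; rewrite xa_rel.
- move=> [/andP [i0 ij] _] [ji' i'n].
  have hi : (0 < i <= n)%N by rewrite i0 (leq_trans ij jn).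
  have hs : (0 < i' < n)%N by rewrite i'n (leq_ltn_trans _ ji').
  have sw : swapi i' i = i.
    rewrite /swapi; case: eqP => [e|_]; first lia.
    case: eqP => [e|_] //; lia.
  by split; apply: mvl_sym1; rewrite sa_rel // sw.
- move=> /andP [i0 ij] [/andP [ji' i'n] _].
  have hi : (0 < i <= n)%N by rewrite i0 (leq_trans ij jn).
  have hi' : (0 < i' <= n)%N by rewrite i'n (leq_ltn_trans _ ji').
  by split; apply: mvl_sym1; rewrite xa_rel.
- move=> /andP [i0 ij] /andP [ji' i'n].
  have hi : (0 < i <= n)%N by rewrite i0 (leq_trans ij jn).
  have hi' : (0 < i' <= n)%N by rewrite i'n (leq_ltn_trans _ ji').
  by split; apply: mvl_sym1; apply: q_base; apply: r_Xcomm.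
- move=> /andP [i0 ij] [ji' i'n].
  have hi : (0 < i <= n)%N by rewrite i0 (leq_trans ij jn).
  have hs : (0 < i' < n)%N by rewrite i'n (leq_ltn_trans _ ji').
  have n1 : i != i' by rewrite neq_ltn (leq_ltn_trans ij ji').
  have n2 : i != i'.+1 by rewrite neq_ltn ltnS (leq_trans ij) // ltnW.
  by split; apply: mvl_sym1; [|symmetry]; apply: q_base; apply: r_SX.
- move=> [i0 ij] [/andP [ji' i'n] _].
  have hs : (0 < i < n)%N by rewrite i0 (leq_trans ij) // (leq_trans jn).
  have hi' : (0 < i' <= n)%N by rewrite i'n (leq_ltn_trans _ ji').
  have sw : swapi i i' = i'.
    rewrite /swapi; case: eqP => [e|_]; first lia.
    case: eqP => [e|_] //; lia.
  by split; apply: mvl_sym1; [|symmetry]; rewrite sa_rel // sw.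
- move=> [i0 ij] /andP [ji' i'n].
  have hs : (0 < i < n)%N by rewrite i0 (leq_trans ij) // (leq_trans jn).
  have hi' : (0 < i' <= n)%N by rewrite i'n (leq_ltn_trans _ ji').
  have n1 : i' != i by rewrite neq_ltn (ltn_trans ij ji') orbT.
  have n2 : i' != i.+1 by rewrite neq_ltn (leq_ltn_trans ij ji') orbT.
  by split; apply: mvl_sym1; [symmetry|]; apply: q_base; apply: r_SX.
- move=> [i0 ij] [ji' i'n].
  have hs : (0 < i < n)%N by rewrite i0 (leq_trans ij) // (leq_trans jn).
  have hs' : (0 < i' < n)%N by rewrite i'n (leq_ltn_trans _ ji').
  have far : (i.+1 < i')%N by rewrite (leq_ltn_trans ij ji').
  split; apply: mvl_sym1; apply: q_base; apply: r_Sfar => //; by rewrite far ?orbT.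
Qed.

Lemma low_high j V W : (j <= n)%N -> lowP j V -> highP j W -> mvl V W /\ mvl W V.
Proof.
move=> jn; elim: V => [g| c| V1 _ V2 _ | V1 IH1 V2 IH2] //=.
- move=> hg; elim: W => [h| c| W1 _ W2 _ | W1 IH1 W2 IH2] //=.
  + move=> hh; exact: (gen_mvl jn hg hh).
  + by move=> _; split; [apply: mvl_C1 | apply: mvl_C2].
  + move=> [h1 h2]; case: (IH1 h1) => a1 b1; case: (IH2 h2) => a2 b2.
    by split; [apply: mvl_mulW | apply: mvl_mulV].
- by move=> _ _; split; [apply: mvl_C2 | apply: mvl_C1].
- move=> [h1 h2] hW; case: (IH1 h1 hW) => a1 b1; case: (IH2 h2 hW) => a2 b2.
  by split; [apply: mvl_mulV | apply: mvl_mulW].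
Qed.

Lemma low_inrange j V : (j <= n.-1)%N -> lowP j V -> inrange n.-1 V.
Proof.
move=> jn; elim: V => [g| c| V1 _ V2 _ | V1 IH1 V2 IH2] //=.
- case: g => [i a|i|i|i] //= ; rewrite /inA /inS.
  + by move=> [/andP [-> ij] _]; rewrite (leq_trans ij).
  + by move=> /andP [-> ij]; rewrite (leq_trans ij).
  + by move=> [-> ij]; rewrite (leq_trans ij).
- by move=> [h1 h2]; rewrite IH1 // IH2.
Qed.

Lemma lowP_pow j u r : lowP j u -> lowP j (tpow u r).
Proof. by move=> h; elim: r => //= r ->. Qed.
Lemma highP_pow j u r : highP j u -> highP j (tpow u r).
Proof. by move=> h; elim: r => //= r ->. Qed.


Fixpoint SLd d := if d is d'.+1 then SLd d' ⊗ sg (n - d'.+1) else tC 1.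
Fixpoint SRd d := if d is d'.+1 then sg (n - d'.+1) ⊗ SRd d' else tC 1.
Definition SL q := SLd (n - q).
Definition SR q := SRd (n - q).

Lemma SL_S q : (q < n)%N -> SL q = SL q.+1 ⊗ sg q.
Proof.
move=> h; rewrite /SL; have -> : (n - q = (n - q.+1).+1)%N by lia.
by rewrite /= (_ : (n - (n - q.+1).+1 = q)%N) //; lia.
Qed.
Lemma SR_S q : (q < n)%N -> SR q = sg q ⊗ SR q.+1.
Proof.
move=> h; rewrite /SR; have -> : (n - q = (n - q.+1).+1)%N by lia.
by rewrite /= (_ : (n - (n - q.+1).+1 = q)%N) //; lia.
Qed.
Lemma SL_n : SL n = tC 1. Proof. by rewrite /SL subnn. Qed.
Lemma SR_n : SR n = tC 1. Proof. by rewrite /SR subnn. Qed.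

Lemma highSLd j d : (j + d < n)%N -> highP j (SLd d) /\ highP j (SRd d).
Proof.
elim: d => [|d IH] h; first by split.
have h' : (j + d < n)%N by lia.
have hg : highG j (GS A (n - d.+1)) by rewrite /=; split; lia.
by case: (IH h') => a b; rewrite /=; split; split.
Qed.

Lemma highSL j q : (j < q <= n)%N -> highP j (SL q) /\ highP j (SR q).
Proof. by move=> h; apply: highSLd; lia. Qed.

Definition NullLR L R M := T (L ⊗ M ⊗ R) ≡' tC 0.

Lemma Null_resp L R M M' : M ≡ M' -> NullLR L R M' -> NullLR L R M.
Proof. by move=> e; rewrite /NullLR; have -> : T (L ⊗ M ⊗ R) ≡' T (L ⊗ M' ⊗ R) by apply: HT; rewrite e. Qed.

Lemma Null_add L R M M' : NullLR L R M -> NullLR L R M' -> NullLR L R (M ⊕ M').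
Proof.
rewrite /NullLR => h1 h2.
have -> : T (L ⊗ (M ⊕ M') ⊗ R) ≡' T (L ⊗ M ⊗ R ⊕ L ⊗ M' ⊗ R) by apply: HT; rewrite tmulDr tmulDl.
by rewrite Hadd h1 h2 tadd0.
Qed.

Lemma Null_scal L R c M : NullLR L R M -> NullLR L R (tC c ⊗ M).
Proof.
rewrite /NullLR => h.
have -> : T (L ⊗ (tC c ⊗ M) ⊗ R) ≡' T (tC c ⊗ (L ⊗ M ⊗ R)).
  by apply: HT; rewrite tCmid -(tmulA (tC c)).
by rewrite Tscal h tmul0r.
Qed.

Lemma Null0 L R : NullLR L R (tC 0).
Proof.
rewrite /NullLR; have -> : T (L ⊗ tC 0 ⊗ R) ≡' T (tC 0) by apply: HT; rewrite tmul0r tmul0l.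
exact: T0.
Qed.

Lemma Null_sum L R (I : Type) (s : seq I) (g : I -> term A) :
  (forall x, NullLR L R (g x)) -> NullLR L R (tsum [seq g x | x <- s]).
Proof.
move=> h; elim: s => [|x s IH]; first exact: Null0.
by rewrite map_cons tsum_consE; apply: Null_add.
Qed.

Lemma Null_movel j L R W V Z : (j <= n.-1)%N -> lowP j V -> highP j W -> highP j L ->
  NullLR L R (W ⊗ Z) -> NullLR L R (W ⊗ V ⊗ Z).
Proof.
move=> jn hV hW hL h.
have jn' : (j <= n)%N by apply: (leq_trans jn); apply: leq_pred.
have [[s1 e1] _] := low_high jn' hV hW.
have [[s2 e2] _] := low_high jn' hV hL.
rewrite /NullLR.
have -> : T (L ⊗ (W ⊗ V ⊗ Z) ⊗ R) ≡' T (tC (s1 * s2) ⊗ (V ⊗ (L ⊗ (W ⊗ Z) ⊗ R))).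
  apply: HT.
  have E1 : W ⊗ V ⊗ Z ≡ tC s1 ⊗ (V ⊗ (W ⊗ Z)).
    by rewrite e1 -(tmulA (tC s1)) -(tmulA V W Z).
  have E2 : L ⊗ (V ⊗ (W ⊗ Z)) ≡ tC s2 ⊗ (V ⊗ (L ⊗ (W ⊗ Z))).
    by rewrite (tmulA L V (W ⊗ Z)) e2 -(tmulA (tC s2)) -(tmulA V L (W ⊗ Z)).
  rewrite E1 tCmid E2 tCmulA -(tmulA (tC (s1 * s2))).
  by rewrite -(tmulA V (L ⊗ (W ⊗ Z)) R).
by rewrite Tscal Tleft ?(low_inrange jn hV) // h tmul0r tmul0r.
Qed.

Lemma Null_mover j L R M V : (j <= n.-1)%N -> lowP j V -> highP j R ->
  NullLR L R M -> NullLR L R (M ⊗ V).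
Proof.
move=> jn hV hR h.
have jn' : (j <= n)%N by apply: (leq_trans jn); apply: leq_pred.
have [_ [s e]] := low_high jn' hV hR.
rewrite /NullLR.
have -> : T (L ⊗ (M ⊗ V) ⊗ R) ≡' T (tC s ⊗ (L ⊗ M ⊗ R ⊗ V)).
  apply: HT.
  rewrite (tmulA L M V) -(tmulA (L ⊗ M) V R) e tCmid.
  by rewrite (tmulA (L ⊗ M) R V).
by rewrite Tscal Tright ?(low_inrange jn hV) // h tmul0l tmul0r.
Qed.


Ltac rassoc := repeat rewrite -tmulA.

Lemma inrange_pow N (u : term A) r : inrange N u -> inrange N (tpow u r).
Proof. by move=> h; elim: r => //= r ->; rewrite h. Qed.

Lemma Null_sum_in L R (I : eqType) (s : seq I) (g : I -> term A) :
  (forall x, x \in s -> NullLR L R (g x)) -> NullLR L R (tsum [seq g x | x <- s]).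
Proof.
elim: s => [|x s IH] h; first exact: Null0.
rewrite map_cons tsum_consE; apply: Null_add; first by apply: h; rewrite mem_head.
by apply: IH => y ys; apply: h; rewrite in_cons ys orbT.
Qed.

Lemma QLN i L R P Z :
  (forall j m, (0 < j < l)%N ->
     NullLR L R (P ⊗ (tpow (xg i.+1) j ⊗ tau F i ⊗ tpow (xg i) m) ⊗ Z)) ->
  forall r m, (r < l)%N -> NullLR L R (P ⊗ (Qp i r ⊗ tpow (xg i) m) ⊗ Z).
Proof.
move=> Hat; elim=> [|r IH] m hr.
  by apply: (Null_resp (M' := tC 0)); [rewrite tmul0l tmul0r tmul0l | apply: Null0].
apply: (Null_resp (M' := P ⊗ (tpow (xg i.+1) r.+1 ⊗ tau F i ⊗ tpow (xg i) m) ⊗ Z ⊕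
                         P ⊗ (Qp i r ⊗ tpow (xg i) m.+1) ⊗ Z)).
  change (Qp i r.+1) with (tpow (xg i.+1) r.+1 ⊗ tau F i ⊕ Qp i r ⊗ xg i).
  rewrite tmulDl tmulDr tmulDl; apply: q_add => //.
  by rewrite -(tmulA (Qp i r) (xg i)).
apply: Null_add; [apply: Hat; lia | apply: IH; lia].
Qed.

Lemma AT i a j m : (0 < i < n)%N ->
  ga i.+1 a ⊗ (tpow (xg i.+1) j ⊗ tau F i ⊗ tpow (xg i) m) ≡
  tsum [seq ga i.+1 (a * bb c) ⊗ tpow (xg i.+1) j ⊗ (ga i (dd c) ⊗ tpow (xg i) m) | c <- enum B].
Proof.
move=> h; have hi1 : (0 < i.+1 <= n)%N by case/andP: h.
rewrite /tau tsum_mull tsum_mulr tsum_mull; apply: tsum_eq => c _.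
rewrite ga_mul //.
rewrite (tmulA (tpow (xg i.+1) j) (ga i.+1 (bb c))) xpa_rel //.
by rassoc.
Qed.


Definition Dq q j a := NullLR (SL q) (SR q) (ga q a ⊗ tpow (xg q) j ⊗ sg q.-1).

Lemma inr_gx N i r a : (0 < i <= N)%N -> inrange N (ga i a ⊗ tpow (xg i) r).
Proof. by move=> h; rewrite /= /inA h inrange_pow //= /inA h. Qed.

Lemma SY i j : (0 < i < n)%N ->
  sg i ⊗ tpow (xg i) j ≡ tpow (xg i.+1) j ⊗ sg i ⊕ tC (- z) ⊗ Qp i j.
Proof.
move=> h; rewrite C3p // -taddA tCaddM subrr tmul0l tadd0 //.
Qed.

Lemma Dbase : (1 < n)%N -> forall j a, (j < l)%N -> Dq n j a.
Proof.
move=> n2 j a jl.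
set i := n.-1.
have hi : i.+1 = n by rewrite /i prednK.
have hin : (0 < i < n)%N by rewrite /i; lia.
rewrite /Dq /NullLR SL_n SR_n.
have E1 := C3p j hin.
have E2 := sga a hin.
have E3 : forall j0 m0, _ := fun j0 m0 => AT a j0 m0 hin.
rewrite hi in E1 E2 E3.
have -> : T (tC 1 ⊗ (ga n a ⊗ tpow (xg n) j ⊗ sg n.-1) ⊗ tC 1) ≡'
          T (tC 1 ⊗ (sg i ⊗ (ga i a ⊗ tpow (xg i) j))) ⊕ tC z ⊗ T (ga n a ⊗ Qp i j).
  rewrite -Tscal -Hadd; apply: HT.
  rewrite (tmul1l (ga n a ⊗ tpow (xg n) j ⊗ sg n.-1)) tmul1r.
  rewrite -(tmulA (ga n a)) E1 tmulDr (tmulA (ga n a) (sg i)) E2 tCmid; apply: q_add => //.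
  by rewrite tmul1l -tmulA.
rewrite Hbim ?inr_gx //; last by rewrite /i; lia.
rewrite Hsig // tmul0l tmul0r tadd0l.
have Q0 : NullLR (tC 1) (tC 1) (ga n a ⊗ (Qp i j ⊗ tpow (xg i) 0) ⊗ tC 1).
  apply: QLN => // j' m hj.
  rewrite hi.
  apply: (Null_resp (M' := tsum [seq ga n (a * bb c) ⊗ tpow (xg n) j' ⊗ (ga i (dd c) ⊗ tpow (xg i) m) | c <- enum B])).
    by rewrite tmul1r E3.
  apply: Null_sum => c; rewrite /NullLR.
  have -> : T (tC 1 ⊗ (ga n (a * bb c) ⊗ tpow (xg n) j' ⊗ (ga i (dd c) ⊗ tpow (xg i) m)) ⊗ tC 1)
        ≡' T (ga n (a * bb c) ⊗ tpow (xg n) j') ⊗ (ga i (dd c) ⊗ tpow (xg i) m).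
    rewrite -Tright ?inr_gx //; last by rewrite /i; lia.
    by apply: HT; rewrite tmul1l tmul1r.
  rewrite Htr; last by lia.
  have -> : (j' == 0%N) = false by lia.
  by rewrite tmul0l.
move: Q0; rewrite /NullLR => Q0.
have -> : T (ga n a ⊗ Qp i j) ≡' T (tC 1 ⊗ (ga n a ⊗ (Qp i j ⊗ tpow (xg i) 0) ⊗ tC 1) ⊗ tC 1).
  by apply: HT; rewrite /= !tmul1r tmul1l.
by rewrite Q0 tmul0r.
Qed.


Lemma homog_mulb a c : (exists p, homog F p a) -> exists p, homog F p (a * bb c).
Proof. by case=> p hp; exists (p (+) par c); apply: Hmulh => //; apply: homog_basis. Qed.

Lemma Dstep q : (1 < q)%N -> (q < n)%N ->
  (forall j a, (j < l)%N -> (exists p, homog F p a) -> Dq q.+1 j a) ->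
  forall j a, (j < l)%N -> (exists p, homog F p a) -> Dq q j a.
Proof.
move=> q1 qn IH j a jl ha.
have hq : (0 < q < n)%N by lia.
have hq' : (0 < q.-1 < n)%N by lia.
have hq1 : q.-1.+1 = q by lia.
have qn1 : (q <= n.-1)%N by lia.
have [hL hR] : highP q (SL q.+1) /\ highP q (SR q.+1) by apply: highSL; lia.
rewrite /Dq /NullLR (SL_S qn) (SR_S qn).
set L := SL q.+1; set R := SR q.+1.
set Y := xg q; set X' := xg q.+1; set s' := sg q.-1; set sq := sg q; set ga' := ga q.+1 a.
have -> : T (L ⊗ sq ⊗ (ga q a ⊗ tpow Y j ⊗ s') ⊗ (sq ⊗ R)) ≡'
          T (L ⊗ (sq ⊗ (ga q a ⊗ tpow Y j ⊗ s') ⊗ sq) ⊗ R) by apply: HT; rassoc.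
change (NullLR L R (sq ⊗ (ga q a ⊗ tpow Y j ⊗ s') ⊗ sq)).
apply: (Null_resp (M' := ga' ⊗ (tpow X' j ⊗ sq) ⊗ (s' ⊗ sq) ⊕
          tC (- z) ⊗ (ga' ⊗ (Qp q j ⊗ tpow Y 0) ⊗ (s' ⊗ sq)))).
  have hqn : (0 < q <= n)%N by lia.
  rassoc.
  rewrite (tmulA sq (ga q a)) sa_rel // swapi_l -/ga' -(tmulA ga' sq).
  rewrite (tmulA sq (tpow Y j)) SY // tmulDl tmulDr; apply: q_add; first by rassoc.
  change (tpow Y 0) with (tC 1).
  by rewrite tmul1l; rassoc; rewrite tCmid.
have hs' : lowP q s' by rewrite /= ; split; lia.
have hsq : (0 < q.-1)%N by lia.
apply: Null_add.
  have br : sq ⊗ (s' ⊗ sq) ≡ s' ⊗ (sq ⊗ s').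
    have b0 : sg q.-1 ⊗ (sg q.-1.+1 ⊗ sg q.-1) ≡ sg q.-1.+1 ⊗ (sg q.-1 ⊗ sg q.-1.+1).
      apply: q_base; apply: r_Sbraid; rewrite /inS; lia.
    by rewrite hq1 in b0; symmetry.
  apply: (Null_resp (M' := ga' ⊗ tpow X' j ⊗ s' ⊗ (sq ⊗ s'))).
    by rassoc; rewrite br.
  have hW : highP q (ga' ⊗ tpow X' j).
    by split; [split; [lia | exact: ha] | apply: highP_pow; rewrite /=; lia].
  apply: (Null_movel qn1 hs' hW hL).
  apply: (Null_resp (M' := ga' ⊗ tpow X' j ⊗ sq ⊗ s')); first by rassoc.
  apply: (Null_mover qn1 hs' hR).
  exact: IH.
apply: Null_scal.
apply: QLN => //.
move=> j' m hj'.
apply: (Null_resp (M' := tsum [seq ga q.+1 (a * bb c) ⊗ tpow X' j' ⊗ (ga q (dd c) ⊗ tpow Y m)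
                               ⊗ (s' ⊗ sq) | c <- enum B])).
  by rewrite -tsum_mulr /ga' AT.
apply: Null_sum => c.
apply: (Null_resp (M' := ga q.+1 (a * bb c) ⊗ tpow X' j' ⊗ (ga q (dd c) ⊗ tpow Y m ⊗ s') ⊗ sq)).
  by rassoc.
have hV : lowP q (ga q (dd c) ⊗ tpow Y m ⊗ s').
  split; [split; [split; [lia | exists (par c); exact: dual_homog] | apply: lowP_pow; rewrite /=; lia] | exact: hs'].
have hW : highP q (ga q.+1 (a * bb c) ⊗ tpow X' j').
  by split; [split; [lia | exact: homog_mulb] | apply: highP_pow; rewrite /=; lia].
apply: (Null_movel qn1 hV hW hL).
apply: IH; [lia | exact: homog_mulb].
Qed.


Lemma D_all d : forall q, q = (n - d)%N -> (1 < q)%N ->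
  forall j a, (j < l)%N -> (exists p, homog F p a) -> Dq q j a.
Proof.
elim: d => [|d IH] q e q1.
  rewrite subn0 in e; rewrite e => j a jl _; apply: Dbase => //; lia.
apply: Dstep => //; first lia.
apply: IH => //; lia.
Qed.

Lemma Eatom i g j m : (0 < i < n)%N -> (j < l)%N -> (exists p, homog F p g) ->
  NullLR (SL i.+1) (SR i.+1)
    (ga i.+1 g ⊗ (tpow (xg i.+1) j ⊗ tau F i ⊗ tpow (xg i) m) ⊗ sg i).
Proof.
move=> hi jl hg.
have [hL hR] : highP i (SL i.+1) /\ highP i (SR i.+1) by apply: highSL; lia.
have in1 : (i <= n.-1)%N by lia.
apply: (Null_resp (M' := tsum [seq ga i.+1 (g * bb c) ⊗ tpow (xg i.+1) j ⊗
                (ga i (dd c) ⊗ tpow (xg i) m) ⊗ sg i | c <- enum B])).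
  by rewrite -tsum_mulr AT.
apply: Null_sum => c.
have hV : lowP i (ga i (dd c) ⊗ tpow (xg i) m).
  split; [split; [lia | exists (par c); exact: dual_homog] | apply: lowP_pow; rewrite /=; lia].
have hW : highP i (ga i.+1 (g * bb c) ⊗ tpow (xg i.+1) j).
  by split; [split; [lia | exact: homog_mulb] | apply: highP_pow; rewrite /=; lia].
apply: (Null_movel in1 hV hW hL).
apply: (D_all (d := (n - i.+1)%N)); [lia | lia | exact: jl | exact: homog_mulb].
Qed.

Lemma Rq_null i : (0 < l)%N -> (0 < i < n)%N -> NullLR (SL i.+1) (SR i.+1) (Rq i ⊗ sg i).
Proof.
move=> l0 hi.
apply: (Null_resp (M' := tsum [seq ga i.+1 (f j) ⊗
   (Qp i (l - j) ⊕ tC (-1) ⊗ (tpow (xg i.+1) (l - j) ⊗ tau F i)) ⊗ sg i | j <- iota 0 l.+1])).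
  by rewrite /Rq tsum_mulr.
apply: Null_sum_in => j; rewrite mem_iota add0n => /andP [_ jl].
have hf : exists p, homog F p (f j) by exists false; case: (Hfh jl).
case E: (l - j)%N => [|r].
  apply: (Null_resp (M' := tC (-1) ⊗ (ga i.+1 (f j) ⊗
             (tpow (xg i.+1) 0 ⊗ tau F i ⊗ tpow (xg i) 0) ⊗ sg i))).
    rewrite /= tadd0l tCmid tmul1r -(tmulA (tC (-1))) //.
  apply: Null_scal; apply: Eatom => //.
apply: (Null_resp (M' := ga i.+1 (f j) ⊗ (Qp i r ⊗ tpow (xg i) 1) ⊗ sg i)).
  change (Qp i r.+1) with (tpow (xg i.+1) r.+1 ⊗ tau F i ⊕ Qp i r ⊗ xg i).
  by rewrite (taddC (tpow (xg i.+1) r.+1 ⊗ tau F i)) taddK /= tmul1r.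
apply: QLN; last by lia.
move=> j' m hj'; apply: Eatom => //; lia.
Qed.

Lemma E_all (l0 : (0 < l)%N) q : (0 < q <= n)%N -> NullLR (SL q) (SR q) (fpoly f l q).
Proof.
elim: q => [|q IH] // hq.
case: q IH hq => [|q] IH hq.
  apply: (Null_resp (M' := tC 0)); last exact: Null0.
  by apply: q_base; apply: r_cyc.
have hq' : (0 < q.+1 < n)%N by lia.
apply: (Null_resp (M' := sg q.+1 ⊗ fpoly f l q.+1 ⊗ sg q.+1 ⊕ tC z ⊗ (Rq q.+1 ⊗ sg q.+1))).
  exact: C5.
apply: Null_add; last by apply: Null_scal; apply: Rq_null.
have := IH (ltac:(lia)); rewrite /NullLR (SL_S (ltac:(lia) : (q.+1 < n)%N)).
rewrite (SR_S (ltac:(lia) : (q.+1 < n)%N)) => H.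
have -> : T (SL q.+2 ⊗ (sg q.+1 ⊗ fpoly f l q.+1 ⊗ sg q.+1) ⊗ SR q.+2) ≡'
          T (SL q.+2 ⊗ sg q.+1 ⊗ fpoly f l q.+1 ⊗ (sg q.+1 ⊗ SR q.+2)) by apply: HT; rassoc.
exact: H.
Qed.

Lemma main_pos (l0 : (0 < l)%N) : T (fpoly f l n) ≡' tC 0.
Proof.
have := E_all l0 (ltac:(lia) : (0 < n <= n)%N).
rewrite /NullLR SL_n SR_n => H.
have -> : T (fpoly f l n) ≡' T (tC 1 ⊗ fpoly f l n ⊗ tC 1) by apply: HT; rewrite tmul1l tmul1r.
exact: H.
Qed.

End Main.


Theorem lemma6p1 (k : comNzRingType) (A : algType k) (F : symFrobData A)
    (z t : k) (l : nat) (f : nat -> A) (n : nat) (T : term A -> term A) :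
  symFrob_axioms F ->
  (exists z' : k, z * z' = 1) -> (exists t' : k, t * t' = 1) ->
  f 0%N = 1 -> f l = (t ^+ 2)%:A ->
  (forall i, (i <= l)%N -> homog F false (f i) /\ (forall a, f i * a = a * f i)) ->
  (1 <= n)%N ->
  (* T is a well-defined map QWA^f_n -> QWA^f_{n-1} *)
  (forall u v, qeq F z f l n u v -> qeq F z f l n.-1 (T u) (T v)) ->
  (* additive *)
  (forall u v, qeq F z f l n.-1 (T (tAdd u v)) (tAdd (T u) (T v))) ->
  (* QWA^f_{n-1}-bimodule map (QWA^f_{n-1} embedded in QWA^f_n) *)
  (forall u w v, inrange n.-1 u -> inrange n.-1 v ->
     qeq F z f l n.-1 (T (tMul u (tMul w v))) (tMul u (tMul (T w) v))) ->
  (* tr^f_n(sigma_{n-1}) = 0 *)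
  ((2 <= n)%N -> qeq F z f l n.-1 (T (tG (GS A n.-1))) (tC A 0)) ->
  (* tr^f_n(a^{(n)} x_n^r) = delta_{r,0} tr(a) for 0 <= r < l *)
  (forall (a : A) (r : nat), (r < l)%N ->
     qeq F z f l n.-1 (T (tMul (tG (GA n a)) (tpow (tG (GX A n)) r)))
                      (tC A (if r == 0%N then sf_tr F a else 0))) ->
  qeq F z f l n.-1 (T (fpoly f l n)) (tC A 0).
Proof.
move=> HF _ _ Hf0 _ Hfh Hn HT Hadd Hbim Hsig Htr.
case: (posnP l) => [l0 | lpos]; last first.
  by eapply main_pos; eassumption.
subst l.
have h1 : (0 < 1 <= n)%N by rewrite Hn.
have c10 : qeq F z f 0 n (tC A 1) (tC A 0).
  have c := q_base (@r_cyc k A F z f 0 n Hn).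
  rewrite -c /fpoly /= Hf0 tadd0 tmul1r.
  by symmetry; apply: q_base; apply: r_Aone.
have E : qeq F z f 0 n (fpoly f 0 n) (tC A 0).
  by rewrite -[X in qeq _ _ _ _ _ X _]tmul1l c10 tmul0l.
transitivity (T (tC A 0)); first exact: HT.
exact: (T0 HT Hadd).
Qed.
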